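(* Let $(F,\phi)$ be an extended representation graph for $E$ and $w\in F^0$ with $\phi(w)=v$. Then: (i) if $w$ is a source or receives an edge lying over a nonspecial real edge, $\phi$ induces a bijection $F^{\ge0}_w\to X_v$; (ii) if $w$ receives an edge lying over a special real edge $e$, $\phi$ induces a bijection from $F^{\ge0}_w$ onto the set of $x\in X_v$ that either have length $0$ or whose first edge is not $e^*$; (iii) if $w$ receives an edge lying over a ghost edge, $\phi$ induces a bijection from $F^{\ge0}_w$ onto the set of $x\in X_v$ that either have length $0$ or whose first edge is a ghost edge. In particular, $\phi$ maps every path in $F$ to a basis path.
   Context: $E=(E^0,E^1,s,r)$ is a row-finite directed graph; a vertex is regular if it emits an edge; for each regular $v$ a fixed edge $e^v\in s^{-1}(v)$ is called special, all other edges nonspecial. Paths of length $n\ge1$ are words $y_1\dots y_n$ of edges with $r(y_i)=s(y_{i+1})$; paths of length $0$ are vertices. For a graph $F$ and $w\in F^0$, $F^{\ge0}_w$ is the set of all paths in $F$ (of any length $\ge0$) with source $w$; a graph homomorphism maps paths to paths letterwise. The double graph $E_d$ has vertices $E^0$ and edges $e$ (real) and $e^*$ (ghost) for $e\in E^1$, with $s_d(e)=s(e),r_d(e)=r(e),s_d(e^* )=r(e),r_d(e^* )=s(e)$. For $p=e_1\dots e_n$ set $p^*=e_n^*\dots e_1^*$. The set $X$ of basis paths consists of the paths in $E_d$: vertices; $p,p^*$ for paths $p$ of length $\ge1$ in $E$; $pq^*$ with $p=e_1\dots e_k,q=f_1\dots f_n$ of length $\ge1$ in $E$, $r(p)=r(q)$,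 and $e_k\ne f_n$ or $e_k=f_n$ nonspecial. $X_v=\{x\in X: s_d(x)=v\}$. An extended representation graph for $E$ is a pair $(F,\phi)$, $F$ a directed graph, $\phi:F\to E_d$ a graph homomorphism, such that for every $w\in F^0$: (i) $w$ is a source or receives exactly one edge $f_w$; (ii) if $w$ is a source or $\phi(f_w)$ is a nonspecial real edge, $\phi$ maps $s^{-1}(w)$ bijectively onto $s_d^{-1}(\phi(w))$; (iii) if $\phi(f_w)$ is a special real edge, $\phi$ maps $s^{-1}(w)$ bijectively onto $s_d^{-1}(\phi(w))\setminus\{\phi(f_w)^*\}$; (iv) if $\phi(f_w)$ is a ghost edge, $\phi$ maps $s^{-1}(w)$ bijectively onto the ghost edges in $s_d^{-1}(\phi(w))$. A vertex or edge of $F$ lies over its image under $\phi$. *)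

(* Defs.v *)
From Stdlib Require Import List.
Import ListNotations.
Set Implicit Arguments.

Record graph := Graph {
  vert : Type;
  edge : Type;
  src : edge -> vert;
  rng : edge -> vert }.
Arguments src {g}.
Arguments rng {g}.

Definition row_finite (G : graph) : Prop :=
  forall v : vert G, exists ls : list (edge G), forall e, src e = v -> In e ls.

Definition regular {G : graph} (v : vert G) : Prop := exists e : edge G, src e = v.

(* [special] marks the chosen edge e^v for each regular vertex v. *)
Definition special_choice {G : graph} (special : edge G -> Prop) : Prop :=
  forall v : vert G, regular v -> exists! e, src e = v /\ special e.

(* The double graph E_d: edges inl e = e (real) and inr e = e^* (ghost). *)
Definition double (G : graph) : graph :=
  @Graph (vert G) (edge G + edge G)
    (fun d => match d with inl e => src e | inr e => rng e end)
    (fun d => match d with inl e => rng e | inr e => src e end).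

(* A path of length n >= 0 with source v, given as its list of edges;
   the path of length 0 is the vertex v itself (empty list). *)
Fixpoint walk {G : graph} (v : vert G) (l : list (edge G)) : Prop :=
  match l with
  | [] => True
  | d :: l' => src d = v /\ walk (rng d) l'
  end.

Fixpoint chain {G : graph} (l : list (edge G)) : Prop :=
  match l with
  | [] => True
  | e :: l' => match l' with
               | [] => True
               | f :: _ => rng e = src f /\ chain l'
               end
  end.

Record hom (F G : graph) := Hom {
  hv : vert F -> vert G;
  he : edge F -> edge G;
  hom_src : forall f, src (he f) = hv (src f);
  hom_rng : forall f, rng (he f) = hv (rng f) }.
Arguments hv {F G}.
Arguments he {F G}.

(* The set X of basis paths in E_d, a path being (source vertex, edge list). *)
Definition basis_path {E : graph} (special : edge E -> Prop)
  (v : vert E) (l : list (edge (double E))) : Prop :=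
  @walk (double E) v l /\
  ( l = []
  \/ (exists p : list (edge E), p <> [] /\ chain p /\ l = map inl p)
  \/ (exists q : list (edge E), q <> [] /\ chain q /\ l = map inr (rev q))
  \/ (exists (p' q' : list (edge E)) (ek fn : edge E),
        chain (p' ++ [ek]) /\ chain (q' ++ [fn]) /\ rng ek = rng fn /\
        (ek <> fn \/ (ek = fn /\ ~ special ek)) /\
        l = map inl (p' ++ [ek]) ++ map inr (rev (q' ++ [fn])))).

Definition bij_onto {A B : Type} (P : A -> Prop) (Q : B -> Prop) (g : A -> B) : Prop :=
  (forall x, P x -> Q (g x)) /\
  (forall x y, P x -> P y -> g x = g y -> x = y) /\
  (forall y, Q y -> exists x, P x /\ g x = y).

Definition is_ghost {E : graph} (d : edge (double E)) : Prop :=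
  exists e : edge E, d = inr e.

Definition ext_rep_graph {E : graph} (special : edge E -> Prop)
  (F : graph) (phi : hom F (double E)) : Prop :=
  forall w : vert F,
    (forall f1 f2 : edge F, rng f1 = w -> rng f2 = w -> f1 = f2) /\
    (((forall f : edge F, rng f <> w) \/
     (exists (f : edge F) (e : edge E), rng f = w /\ he phi f = inl e /\ ~ special e)) ->
     bij_onto (fun f : edge F => src f = w)
              (fun d : edge (double E) => src d = hv phi w) (he phi)) /\
    (forall (f : edge F) (e : edge E), rng f = w -> he phi f = inl e -> special e ->
     bij_onto (fun f' : edge F => src f' = w)
              (fun d : edge (double E) => src d = hv phi w /\ d <> inr e) (he phi)) /\
    (forall (f : edge F) (e : edge E), rng f = w -> he phi f = inr e ->
     bij_onto (fun f' : edge F => src f' = w)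
              (fun d : edge (double E) => src d = hv phi w /\ is_ghost d) (he phi)).

(* Main.v *)
Require Import Defs.
From Stdlib Require Import List Classical.
Import ListNotations.

Fixpoint adj {A : Type} (R : A -> A -> Prop) (l : list A) : Prop :=
  match l with
  | [] => True
  | a :: l' => match l' with [] => True | b :: _ => R a b /\ adj R l' end
  end.

Lemma adj_impl {A} (R S : A -> A -> Prop) l :
  (forall a b, R a b -> S a b) -> adj R l -> adj S l.
Proof.
  intros H. induction l as [|a l IH]; simpl; auto.
  destruct l as [|b l]; auto. intros [H1 H2]; split; auto.
Qed.

Lemma adj_map {A B} (R : B -> B -> Prop) (f : A -> B) l :
  adj R (map f l) -> adj (fun a b => R (f a) (f b)) l.
Proof.
  induction l as [|a l IH]; simpl; auto.
  destruct l as [|b l]; simpl; auto. intros [H1 H2]; split; auto.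
  apply IH. exact H2.
Qed.

Lemma adj_app_l {A} (R : A -> A -> Prop) l1 l2 : adj R (l1 ++ l2) -> adj R l1.
Proof.
  induction l1 as [|a l IH]; simpl; auto.
  destruct l as [|b l]; simpl; auto. intros [H1 H2]; split; auto.
  apply IH. exact H2.
Qed.

Lemma adj_app_r {A} (R : A -> A -> Prop) l1 l2 : adj R (l1 ++ l2) -> adj R l2.
Proof.
  induction l1 as [|a l IH]; simpl; auto.
  intros H. apply IH. destruct (l ++ l2); tauto.
Qed.

Lemma adj_mid {A} (R : A -> A -> Prop) l a b r : adj R (l ++ a :: b :: r) -> R a b.
Proof.
  induction l as [|c l IH]; simpl; [tauto|].
  intros H. apply IH. destruct (l ++ a :: b :: r); tauto.
Qed.

Lemma adj_snoc {A} (R : A -> A -> Prop) l b a :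
  adj R (l ++ [b]) -> R b a -> adj R (l ++ [b; a]).
Proof.
  induction l as [|c l IH]; simpl; intros H1 H2; [tauto|].
  destruct l as [|d l]; simpl in *; [tauto|].
  destruct H1 as [H1 H3]; split; auto.
  apply (IH H3 H2).
Qed.

Lemma adj_rev {A} (R : A -> A -> Prop) l :
  adj (fun a b => R b a) l -> adj R (rev l).
Proof.
  induction l as [|a l IH]; simpl; auto.
  destruct l as [|b l']; simpl; auto.
  intros [H1 H2]. specialize (IH H2). simpl in IH.
  rewrite <- app_assoc. simpl. apply adj_snoc; auto.
Qed.

Lemma walk_adj (G : graph) (v : vert G) l :
  walk v l -> adj (fun a b => rng a = src b) l.
Proof.
  revert v. induction l as [|a l IH]; simpl; auto.
  intros v [H1 H2]. destruct l as [|b l]; auto.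
  split. simpl in H2. destruct H2; auto. eapply IH; eauto.
Qed.

Lemma chain_adj (G : graph) (l : list (edge G)) :
  adj (fun a b => rng a = src b) l -> chain l.
Proof.
  induction l as [|a l IH]; simpl; auto.
  destruct l as [|b l]; auto. intros [H1 H2]; split; auto.
Qed.

Definition allowed {E : graph} (special : edge E -> Prop)
  (prev : option (edge (double E))) (d : edge (double E)) : Prop :=
  match prev with
  | None => True
  | Some (inl e) => special e -> d <> inr e
  | Some (inr _) => is_ghost d
  end.

Fixpoint goodfrom {E : graph} (special : edge E -> Prop)
  (prev : option (edge (double E))) (l : list (edge (double E))) : Prop :=
  match l with
  | [] => True
  | d :: l' => allowed special prev d /\ goodfrom special (Some d) l'
  end.

Definition notghost {E : graph} (prev : option (edge (double E))) : Prop :=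
  forall e, prev <> Some (inr e).

Lemma good_inl {E : graph} (special : edge E -> Prop) p :
  forall prev, notghost prev -> goodfrom special prev (map inl p).
Proof.
  induction p as [|a p IH]; simpl; auto.
  intros prev Hp. split.
  - destruct prev as [[e|e]|]; simpl; auto. intros _ H; discriminate.
    exfalso; apply (Hp e); auto.
  - apply IH. intros e H; discriminate.
Qed.

Lemma good_inr {E : graph} (special : edge E -> Prop) q :
  forall e0, goodfrom special (Some (inr e0)) (map inr q).
Proof.
  induction q as [|a q IH]; simpl; auto.
  intros e0. split; auto. exists a; auto.
Qed.

Lemma good_mixed {E : graph} (special : edge E -> Prop) ek fn r p' :
  forall prev, notghost prev -> allowed special (Some (inl ek)) (inr fn) ->
  goodfrom special prev (map inl p' ++ inl ek :: inr fn :: map inr r).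
Proof.
  induction p' as [|a p IH]; simpl; intros prev Hp Ha.
  - split; [|split; [auto| apply good_inr]].
    destruct prev as [[e|e]|]; simpl; auto. intros _ H; discriminate.
    exfalso; apply (Hp e); auto.
  - split.
    + destruct prev as [[e|e]|]; simpl; auto. intros _ H; discriminate.
      exfalso; apply (Hp e); auto.
    + apply IH; auto. intros e H; discriminate.
Qed.

Lemma ghost_tail {E : graph} (special : edge E -> Prop) x :
  forall e0, goodfrom special (Some (inr e0)) x -> exists q, x = map inr q.
Proof.
  induction x as [|d x IH]; simpl; intros e0 H. exists []; auto.
  destruct H as [[e He] H2]. subst d. destruct (IH e H2) as [q Hq].
  exists (e :: q). simpl; congruence.
Qed.

Lemma decomp {E : graph} (special : edge E -> Prop) x :
  forall prev, goodfrom special prev x ->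
  exists p q, x = map inl p ++ map inr q.
Proof.
  induction x as [|d x IH]; simpl; intros prev H. exists [], []; auto.
  destruct H as [_ H2]. destruct d as [e|e].
  - destruct (IH _ H2) as [p [q Hpq]]. exists (e :: p), q. simpl; congruence.
  - destruct (ghost_tail special x e H2) as [q Hq]. exists [], (e :: q).
    simpl; congruence.
Qed.

Lemma good_mid {E : graph} (special : edge E -> Prop) l a b r :
  forall prev, goodfrom special prev (l ++ a :: b :: r) -> allowed special (Some a) b.
Proof.
  induction l as [|c l IH]; simpl; intros prev H; [tauto|].
  destruct H as [_ H]; eapply IH; eauto.
Qed.

Lemma basis_iff {E : graph} (special : edge E -> Prop) v x :
  basis_path special v x <-> @walk (double E) v x /\ goodfrom special None x.
Proof.
  split.
  - intros [Hw H]. split; auto.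
    destruct H as [H|[H|[H|H]]].
    + subst; simpl; auto.
    + destruct H as [p [_ [_ ->]]]. apply good_inl. intros e H; discriminate.
    + destruct H as [q [_ [_ ->]]]. destruct (rev q) as [|a q']; simpl; auto.
      split; auto. apply good_inr.
    + destruct H as [p' [q' [ek [fn [_ [_ [_ [Hc ->]]]]]]]].
      replace (map inl (p' ++ [ek]) ++ map inr (rev (q' ++ [fn])))
        with (map inl p' ++ inl ek :: inr fn :: map inr (rev q')).
      2:{ rewrite rev_app_distr. simpl. rewrite map_app, <- app_assoc. reflexivity. }
      apply good_mixed. intros e H; discriminate.
      simpl. intros Hs Heq. injection Heq as Heq. subst.
      destruct Hc as [Hc|[_ Hc]]; auto.
  - intros [Hw Hg]. split; auto.
    pose proof (walk_adj _ _ _ Hw) as Ha.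
    destruct (decomp special x None Hg) as [p [q ->]].
    destruct p as [|p0 p1] eqn:Hp; [destruct q as [|q0 q1] eqn:Hq|].
    + left; auto.
    + right; right; left. exists (rev (q0 :: q1)). split.
      { intro H. apply (f_equal (@length _)) in H. rewrite length_rev in H. discriminate. }
      split.
      * apply chain_adj. apply adj_rev. simpl app in Ha. change (inr q0 :: map inr q1) with (map (@inr (edge E) (edge E)) (q0 :: q1)) in Ha. apply adj_map in Ha.
        eapply adj_impl; [|exact Ha]. simpl; intros; auto.
      * rewrite rev_involutive; auto.
    + rewrite <- Hp in *. assert (Hpn : p <> []) by (subst; discriminate).
      destruct (exists_last Hpn) as [p' [ek Hpe]].
      assert (Hchp : chain p).
      { apply chain_adj. apply adj_app_l in Ha. apply adj_map in Ha.
        eapply adj_impl; [|exact Ha]. simpl; intros; auto. }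
      destruct q as [|fn q0].
      * right; left. exists p. rewrite app_nil_r. auto.
      * right; right; right. exists p', (rev q0), ek, fn.
        rewrite Hpe in Ha, Hg, Hchp.
        assert (Heqx : map inl (p' ++ [ek]) ++ map inr (fn :: q0)
                       = map inl p' ++ inl ek :: inr fn :: map inr q0).
        { rewrite map_app, <- app_assoc. reflexivity. }
        rewrite Heqx in Ha, Hg.
        split; [auto|]. split.
        { apply chain_adj. change (rev q0 ++ [fn]) with (rev (fn :: q0)).
          apply adj_rev. rewrite <- Heqx in Ha. apply adj_app_r in Ha.
          apply adj_map in Ha. eapply adj_impl; [|exact Ha]. simpl; intros; auto. }
        split.
        { apply adj_mid in Ha. simpl in Ha. auto. }
        split.
        { apply good_mid in Hg. simpl in Hg.
          destruct (classic (ek = fn)) as [He|He]; auto. right; split; auto.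
          intro Hs. apply (Hg Hs). congruence. }
        rewrite Hpe. change (rev q0 ++ [fn]) with (rev (fn :: q0)).
        rewrite rev_involutive. auto.
Qed.

Lemma bij_ext {A B : Type} (P P' : A -> Prop) (Q Q' : B -> Prop) (g : A -> B) :
  (forall x, P x <-> P' x) -> (forall y, Q y <-> Q' y) ->
  bij_onto P Q g -> bij_onto P' Q' g.
Proof.
  intros HP HQ [H1 [H2 H3]]. split; [|split].
  - intros x Hx. apply HQ, H1, HP, Hx.
  - intros x y Hx Hy. apply H2; apply HP; auto.
  - intros y Hy. destruct (H3 y (proj2 (HQ y) Hy)) as [x [Hx Hg]].
    exists x; split; auto. apply HP; auto.
Qed.

Definition state_ok {E : graph} (special : edge E -> Prop) {F : graph}
  (phi : hom F (double E)) (w : vert F) (prev : option (edge (double E))) : Prop :=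
  bij_onto (fun f : edge F => src f = w)
    (fun d : edge (double E) => src d = hv phi w /\ allowed special prev d) (he phi).

Lemma next_ok {E : graph} (special : edge E -> Prop) {F : graph}
  (phi : hom F (double E)) (HF : ext_rep_graph special phi) (f : edge F) :
  state_ok special phi (rng f) (Some (he phi f)).
Proof.
  destruct (HF (rng f)) as [_ [Hii [Hiii Hiv]]]. unfold state_ok.
  destruct (he phi f) as [e|e] eqn:Hf.
  - destruct (classic (special e)) as [Hs|Hs].
    + eapply bij_ext; [| |exact (Hiii f e eq_refl Hf Hs)]; [tauto|].
      intros y; simpl; tauto.
    + eapply bij_ext; [| |apply Hii; right; exists f, e; auto]; [tauto|].
      intros y; simpl; tauto.
  - eapply bij_ext; [| |exact (Hiv f e eq_refl Hf)]; [tauto|].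
    intros y; simpl; tauto.
Qed.

Lemma walks_into {E : graph} (special : edge E -> Prop) {F : graph}
  (phi : hom F (double E)) (HF : ext_rep_graph special phi) l :
  forall w prev, state_ok special phi w prev -> walk w l ->
  @walk (double E) (hv phi w) (map (he phi) l) /\ goodfrom special prev (map (he phi) l).
Proof.
  induction l as [|f l IH]; simpl; auto.
  intros w prev Hs [Hf Hw].
  destruct (proj1 Hs f Hf) as [H1 H2].
  destruct (IH (rng f) _ (next_ok special phi HF f) Hw) as [H3 H4].
  pose proof (hom_rng phi f) as Hr. simpl in Hr. rewrite Hr. tauto.
Qed.

Lemma walks_inj {E : graph} (special : edge E -> Prop) {F : graph}
  (phi : hom F (double E)) (HF : ext_rep_graph special phi) l1 :
  forall l2 w prev, state_ok special phi w prev -> walk w l1 -> walk w l2 ->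
  map (he phi) l1 = map (he phi) l2 -> l1 = l2.
Proof.
  induction l1 as [|f1 l1 IH]; intros [|f2 l2] w prev Hs H1 H2 Heq;
    simpl in *; try discriminate; auto.
  injection Heq as Hf Hl. destruct H1 as [H1 H1']. destruct H2 as [H2 H2'].
  assert (f1 = f2) by (apply (proj1 (proj2 Hs)); auto). subst f2.
  f_equal. exact (IH l2 (rng f1) _ (next_ok special phi HF f1) H1' H2' Hl).
Qed.

Lemma walks_surj {E : graph} (special : edge E -> Prop) {F : graph}
  (phi : hom F (double E)) (HF : ext_rep_graph special phi) x :
  forall w prev, state_ok special phi w prev -> @walk (double E) (hv phi w) x ->
  goodfrom special prev x -> exists l, walk w l /\ map (he phi) l = x.
Proof.
  induction x as [|d x IH]; simpl; intros w prev Hs Hw Hg.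
  - exists []; simpl; auto.
  - destruct Hw as [Hw1 Hw2]. destruct Hg as [Hg1 Hg2].
    destruct (proj2 (proj2 Hs) d (conj Hw1 Hg1)) as [f [Hf Hfd]].
    subst d.
    destruct (IH (rng f) _ (next_ok special phi HF f)) as [l [Hl Hm]];
      [rewrite <- hom_rng; auto | auto |].
    exists (f :: l). split; [simpl; auto|rewrite <- Hm; reflexivity].
Qed.

Lemma walks_bij {E : graph} (special : edge E -> Prop) {F : graph}
  (phi : hom F (double E)) (HF : ext_rep_graph special phi) w prev :
  state_ok special phi w prev ->
  bij_onto (fun l => walk w l)
    (fun x => @walk (double E) (hv phi w) x /\ goodfrom special prev x) (map (he phi)).
Proof.
  intros Hs. split; [|split].
  - intros l Hl. eapply walks_into; eauto.
  - intros l1 l2 H1 H2. eapply walks_inj; eauto.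
  - intros y [Hy1 Hy2]. destruct (walks_surj special phi HF y w prev Hs Hy1 Hy2) as [l Hl].
    exists l; auto.
Qed.

Lemma source_ok {E : graph} (special : edge E -> Prop) {F : graph}
  (phi : hom F (double E)) (HF : ext_rep_graph special phi) w :
  ((forall f : edge F, rng f <> w) \/
    (exists (f : edge F) (e : edge E), rng f = w /\ he phi f = inl e /\ ~ special e)) ->
  state_ok special phi w None.
Proof.
  intros H. destruct (HF w) as [_ [Hii _]]. unfold state_ok.
  eapply bij_ext; [| |exact (Hii H)]; [tauto|]. intros y; simpl; tauto.
Qed.

Theorem lemma5p1 (E : graph) (special : edge E -> Prop)
  (HE : row_finite E) (Hsp : special_choice special)
  (F : graph) (phi : hom F (double E)) (HF : ext_rep_graph special phi)
  (w : vert F) (v : vert E) (Hwv : hv phi w = v) :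
  (* (i) *)
  (((forall f : edge F, rng f <> w) \/
    (exists (f : edge F) (e : edge E), rng f = w /\ he phi f = inl e /\ ~ special e)) ->
   bij_onto (fun l : list (edge F) => walk w l)
            (fun x : list (edge (double E)) => basis_path special v x)
            (map (he phi))) /\
  (* (ii) *)
  (forall (f : edge F) (e : edge E), rng f = w -> he phi f = inl e -> special e ->
   bij_onto (fun l : list (edge F) => walk w l)
            (fun x : list (edge (double E)) =>
               basis_path special v x /\ (x = [] \/ exists d x', x = d :: x' /\ d <> inr e))
            (map (he phi))) /\
  (* (iii) *)
  (forall (f : edge F) (e : edge E), rng f = w -> he phi f = inr e ->
   bij_onto (fun l : list (edge F) => walk w l)
            (fun x : list (edge (double E)) =>
               basis_path special v x /\ (x = [] \/ exists d x', x = d :: x' /\ is_ghost d))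
            (map (he phi))) /\
  (* in particular *)
  (forall (w' : vert F) (l : list (edge F)),
     walk w' l -> basis_path special (hv phi w') (map (he phi) l)).
Proof.
  subst v. split; [|split; [|split]].
  - intros H. eapply bij_ext; [| |exact (walks_bij special phi HF w None (source_ok special phi HF w H))];
      [tauto|]. intros y. rewrite basis_iff. tauto.
  - intros f e Hr He Hs. pose proof (next_ok special phi HF f) as Hn.
    rewrite Hr, He in Hn.
    eapply bij_ext; [| |exact (walks_bij special phi HF w _ Hn)]; [tauto|].
    intros y. rewrite basis_iff. destruct y as [|d y]; simpl.
    + split; intros; intuition.
    + split.
      * intros [Hw [Hd Hg]]. split; [tauto|]. right; exists d, y; split; [reflexivity|auto].
      * intros [[Hw [_ Hg]] [H|[d' [y' [Hdy Hne]]]]]; [discriminate|].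
        injection Hdy as -> ->. tauto.
  - intros f e Hr He. pose proof (next_ok special phi HF f) as Hn.
    rewrite Hr, He in Hn.
    eapply bij_ext; [| |exact (walks_bij special phi HF w _ Hn)]; [tauto|].
    intros y. rewrite basis_iff. destruct y as [|d y]; simpl.
    + split; intros; intuition.
    + split.
      * intros [Hw [Hd Hg]]. split; [tauto|]. right; exists d, y; split; [reflexivity|auto].
      * intros [[Hw [_ Hg]] [H|[d' [y' [Hdy Hne]]]]]; [discriminate|].
        injection Hdy as -> ->. tauto.
  - intros w' l Hl. apply basis_iff.
    destruct (classic (exists f, rng f = w')) as [[f Hf]|Hn].
    + pose proof (next_ok special phi HF f) as Hs. rewrite Hf in Hs.
      destruct (walks_into special phi HF l w' _ Hs Hl) as [H1 H2].
      split; auto. destruct (map (he phi) l); simpl in *; tauto.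
    + assert (Hs : state_ok special phi w' None).
      { apply source_ok; auto. left; intros f Hf; apply Hn; eauto. }
      exact (walks_into special phi HF l w' _ Hs Hl).
Qed.
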